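(* (i) Every finite BL-algebra with $n$ elements, $2\leq n\leq 5$, which is not an MV-algebra is isomorphic to an ordinal product $\mathcal{L}_1\boxtimes\mathcal{L}_2$ of BL-algebras. (ii) Writing $\mathcal{BL}_n$ for the set of BL-algebras with $n$ elements and $\mathcal{MV}_n$ for the set of MV-algebras with $n$ elements (both up to isomorphism), one has $|\mathcal{BL}_2|=|\mathcal{MV}_2|=\pi(2)+1$, $|\mathcal{BL}_3|=|\mathcal{MV}_3|+|\mathcal{BL}_2|=\pi(3)+\pi(2)+2$, $|\mathcal{BL}_4|=|\mathcal{MV}_4|+|\mathcal{BL}_3|+|\mathcal{BL}_2|=\pi(4)+\pi(3)+2\pi(2)+4$, $|\mathcal{BL}_5|=|\mathcal{MV}_5|+|\mathcal{BL}_4|+|\mathcal{BL}_3|+|\mathcal{BL}_2|=\pi(5)+\pi(4)+2\pi(3)+4\pi(2)+8$.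
   Context: A residuated lattice is an algebra $(L,\wedge,\vee,\odot,\rightarrow,0,1)$ with $(L,\wedge,\vee,0,1)$ a bounded lattice, $(L,\odot,1)$ a commutative ordered monoid, and $z\leq x\rightarrow y$ iff $x\odot z\leq y$. A BL-algebra is a residuated lattice satisfying $(x\rightarrow y)\vee(y\rightarrow x)=1$ and $x\odot(x\rightarrow y)=x\wedge y$. An MV-algebra is (equivalently) a residuated lattice satisfying $(x\rightarrow y)\rightarrow y=(y\rightarrow x)\rightarrow x$; MV-algebras are exactly the BL-algebras with $x^{**}=x$, where $x^*=x\rightarrow 0$. Ordinal product: given residuated lattices $\mathcal{L}_1=(L_1,\wedge_1,\vee_1,\odot_1,\rightarrow_1,0_1,1_1)$ and $\mathcal{L}_2=(L_2,\wedge_2,\vee_2,\odot_2,\rightarrow_2,0_2,1_2)$ with $1_1=0_2$ and $(L_1\setminus\{1_1\})\cap(L_2\setminus\{0_2\})=\emptyset$, $\mathcal{L}_1\boxtimes\mathcal{L}_2$ has universe $L_1\cup L_2$, $0=0_1$, $1=1_2$; $x\leq y$ iff ($x,y\in L_1$, $x\leq_1 y$) or ($x,y\in L_2$, $x\leq_2 y$) or ($x\in L_1$, $y\in L_2$); meet and join are computed in $L_i$ when both arguments lie in $L_i$, and otherwise $x\wedge y=x$, $x\vee y=y$ for $x\in L_1,y\in L_2$; $x\rightarrow y=1$ if $x\leq y$, $x\rightarrow y=x\rightarrow_i y$ if $x\not\leq y$ and $x,y\in L_i$, and $x\rightarrow y=y$ if $x\not\leq y$, $x\in L_2$, $y\in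 L_1\setminus\{1_1\}$; $x\odot y=x\odot_i y$ if $x,y\in L_i$, and $x\odot y=x$ if $x\in L_1\setminus\{1_1\}$, $y\in L_2$ (and symmetrically). For an integer $n\geq 2$, $\pi(n)$ denotes the number of (unordered) decompositions of $n$ as a product of at least two factors each greater than $1$ (so $\pi(n)=0$ for $n$ prime). *)

(* Defs.v *)
From mathcomp Require Import all_boot fingroup perm.
Set Implicit Arguments. Unset Strict Implicit. Unset Printing Implicit Defensive.

Record RLops (T : Type) := RLOps {
  rmeet : T -> T -> T; rjoin : T -> T -> T;
  rmul : T -> T -> T; rimp : T -> T -> T;
  rzero : T; rone : T }.

Section RLDefs.
Variables (T : finType) (A : RLops T).
Local Notation "x ∧ y" := (rmeet A x y) (at level 40).
Local Notation "x ∨ y" := (rjoin A x y) (at level 40).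
Local Notation "x ⊙ y" := (rmul A x y) (at level 40).
Local Notation "x → y" := (rimp A x y) (at level 40).

Definition rle (x y : T) : bool := x ∧ y == x.

Definition bounded_lattice_ax : bool :=
  [&& [forall x, forall y, x ∧ y == y ∧ x],
      [forall x, forall y, x ∨ y == y ∨ x],
      [forall x, forall y, forall z, x ∧ (y ∧ z) == (x ∧ y) ∧ z],
      [forall x, forall y, forall z, x ∨ (y ∨ z) == (x ∨ y) ∨ z],
      [forall x, forall y, x ∧ (x ∨ y) == x],
      [forall x, forall y, x ∨ (x ∧ y) == x] &
      [forall x, rle (rzero A) x && rle x (rone A)]].

Definition comm_ordered_monoid_ax : bool :=
  [&& [forall x, forall y, x ⊙ y == y ⊙ x],
      [forall x, forall y, forall z, x ⊙ (y ⊙ z) == (x ⊙ y) ⊙ z],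
      [forall x, x ⊙ rone A == x] &
      [forall x, forall y, forall z, rle x y ==> rle (x ⊙ z) (y ⊙ z)]].

Definition residuation_ax : bool :=
  [forall x, forall y, forall z, rle z (x → y) == rle (x ⊙ z) y].

Definition is_RL : bool :=
  [&& bounded_lattice_ax, comm_ordered_monoid_ax & residuation_ax].

Definition is_BL : bool :=
  [&& is_RL,
      [forall x, forall y, (x → y) ∨ (y → x) == rone A] &
      [forall x, forall y, x ⊙ (x → y) == x ∧ y]].

Definition is_MV : bool :=
  is_RL && [forall x, forall y, (x → y) → y == (y → x) → x].
End RLDefs.

Definition hom_ops (T U : finType) (A : RLops T) (B : RLops U) (f : T -> U) : bool :=
  [&& [forall x, forall y, f (rmeet A x y) == rmeet B (f x) (f y)],
      [forall x, forall y, f (rjoin A x y) == rjoin B (f x) (f y)],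
      [forall x, forall y, f (rmul A x y) == rmul B (f x) (f y)],
      [forall x, forall y, f (rimp A x y) == rimp B (f x) (f y)],
      f (rzero A) == rzero B & f (rone A) == rone B].

Definition iso_ops (T U : finType) (A : RLops T) (B : RLops U) : Prop :=
  exists f : T -> U, bijective f /\ hom_ops A B f.

(* Ordinal product L1 ⊠ L2.  Its universe L1 ∪ L2 (with 1_1 = 0_2) is
   represented as (L1 \ {1_1}) + L2, the element 1_1 being represented
   by inr 0_2. *)
Section OrdinalProduct.
Variables (T1 T2 : finType) (L1 : RLops T1) (L2 : RLops T2).

Definition OPT := ({x : T1 | x != rone L1} + T2)%type.

Definition inj1 (x : T1) : OPT :=
  match insub x with Some y => inl y | None => inr (rzero L2) end.

Definition op_meet (u v : OPT) : OPT :=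
  match u, v with
  | inl a, inl b => inj1 (rmeet L1 (val a) (val b))
  | inl a, inr _ => inl a
  | inr _, inl b => inl b
  | inr a, inr b => inr (rmeet L2 a b)
  end.

Definition op_join (u v : OPT) : OPT :=
  match u, v with
  | inl a, inl b => inj1 (rjoin L1 (val a) (val b))
  | inl _, inr b => inr b
  | inr a, inl _ => inr a
  | inr a, inr b => inr (rjoin L2 a b)
  end.

Definition op_mul (u v : OPT) : OPT :=
  match u, v with
  | inl a, inl b => inj1 (rmul L1 (val a) (val b))
  | inl a, inr _ => inl a
  | inr _, inl b => inl b
  | inr a, inr b => inr (rmul L2 a b)
  end.

Definition op_imp (u v : OPT) : OPT :=
  match u, v with
  | inl a, inl b => if rle L1 (val a) (val b) then inr (rone L2)
                    else inj1 (rimp L1 (val a) (val b))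
  | inl _, inr _ => inr (rone L2)
  | inr _, inl b => inl b
  | inr a, inr b => if rle L2 a b then inr (rone L2) else inr (rimp L2 a b)
  end.

Definition ordinal_product : RLops OPT :=
  RLOps op_meet op_join op_mul op_imp (inj1 (rzero L1)) (inr (rone L2)).
End OrdinalProduct.

Definition alg (n : nat) : finType :=
  ({ffun 'I_n * 'I_n -> 'I_n} * {ffun 'I_n * 'I_n -> 'I_n} *
   {ffun 'I_n * 'I_n -> 'I_n} * {ffun 'I_n * 'I_n -> 'I_n} * 'I_n * 'I_n)%type.

Definition to_ops (n : nat) (a : alg n) : RLops 'I_n :=
  let: (m, j, p, i, z, o) := a in
  RLOps (fun x y => m (x, y)) (fun x y => j (x, y))
        (fun x y => p (x, y)) (fun x y => i (x, y)) z o.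

Definition iso_alg (n : nat) (a b : alg n) : bool :=
  [exists s : {perm 'I_n}, hom_ops (to_ops a) (to_ops b) s].

Definition num_classes (n : nat) (P : forall T : finType, RLops T -> bool) : nat :=
  let S := [set a : alg n | P _ (to_ops a)] in
  #|[set [set b in S | iso_alg a b] | a in S]|.

Definition BLcount (n : nat) : nat := num_classes n (@is_BL).
Definition MVcount (n : nat) : nat := num_classes n (@is_MV).

(* pi n : number of unordered decompositions of n as a product of at least
   two factors > 1.  An unordered decomposition is a multiset of factors,
   encoded by its multiplicity function e (e d = multiplicity of factor d);
   factors and multiplicities are at most n. *)
Definition pi_dec (n : nat) : nat :=
  #|[set e : {ffun 'I_n.+1 -> 'I_n.+1} |
      [&& [forall d : 'I_n.+1, (d <= 1) ==> (e d == ord0)],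
          \prod_(d : 'I_n.+1) d ^ e d == n &
          1 < \sum_(d : 'I_n.+1) e d]]|.

(* Main.v *)
Require Import Defs.
From mathcomp Require Import all_boot fingroup perm.
From Stdlib Require Import FunctionalExtensionality.
Set Implicit Arguments. Unset Strict Implicit. Unset Printing Implicit Defensive.

Section Quant.
Variable T : finType.
Lemma fa1 (P : T -> bool) : [forall x, P x] -> forall x, P x.
Proof. by move/forallP. Qed.
Lemma fa2 (P : T -> T -> bool) : [forall x, forall y, P x y] -> forall x y, P x y.
Proof. by move=> H x y; move/forallP: H => /(_ x) /forallP. Qed.
Lemma fa3 (P : T -> T -> T -> bool) :
  [forall x, forall y, forall z, P x y z] -> forall x y z, P x y z.
Proof. by move=> H x y z; move/forallP: H => /(_ x) /forallP /(_ y) /forallP. Qed.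
Lemma af1 (P : T -> bool) : (forall x, P x) -> [forall x, P x].
Proof. by move=> H; apply/forallP. Qed.
Lemma af2 (P : T -> T -> bool) : (forall x y, P x y) -> [forall x, forall y, P x y].
Proof. by move=> H; apply/forallP => x; apply/forallP. Qed.
Lemma af3 (P : T -> T -> T -> bool) :
  (forall x y z, P x y z) -> [forall x, forall y, forall z, P x y z].
Proof. by move=> H; apply/forallP => x; apply/forallP => y; apply/forallP. Qed.
Lemma forall_all (e : seq T) (He : forall x, x \in e) (P Q : T -> bool) :
  (forall x, P x = Q x) -> [forall x, P x] = all Q e.
Proof.
move=> PQ; apply/forallP/allP => H x; first by rewrite -PQ.
by rewrite PQ; apply: H.
Qed.
End Quant.

Section Spec.
Variables (T : finType) (A : RLops T).
Local Notation "x ∧ y" := (rmeet A x y) (at level 40).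
Local Notation "x ∨ y" := (rjoin A x y) (at level 40).
Local Notation "x ⊙ y" := (rmul A x y) (at level 40).
Local Notation "x → y" := (rimp A x y) (at level 40).
Local Notation le := (rle A).

Record RLspec : Prop := {
  meetC : forall x y, x ∧ y = y ∧ x;
  joinC : forall x y, x ∨ y = y ∨ x;
  meetA : forall x y z, x ∧ (y ∧ z) = (x ∧ y) ∧ z;
  joinA : forall x y z, x ∨ (y ∨ z) = (x ∨ y) ∨ z;
  absMJ : forall x y, x ∧ (x ∨ y) = x;
  absJM : forall x y, x ∨ (x ∧ y) = x;
  le0 : forall x, le (rzero A) x;
  le1 : forall x, le x (rone A);
  mulC : forall x y, x ⊙ y = y ⊙ x;
  mulA : forall x y z, x ⊙ (y ⊙ z) = (x ⊙ y) ⊙ z;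
  mul1 : forall x, x ⊙ rone A = x;
  mulmono : forall x y z, le x y -> le (x ⊙ z) (y ⊙ z);
  resid : forall x y z, le z (x → y) = le (x ⊙ z) y }.

Lemma RLP : reflect RLspec (is_RL A).
Proof.
apply: (iffP idP).
  case/and3P => /andP [h1 /andP [h2 /andP [h3 /andP [h4 /andP [h5 /andP [h6 h7]]]]]] /and4P [h8 h9 h10 h11] h12.
  move/fa2: h1 => h1; move/fa2: h2 => h2; move/fa3: h3 => h3; move/fa3: h4 => h4.
  move/fa2: h5 => h5; move/fa2: h6 => h6; move/fa1: h7 => h7.
  move/fa2: h8 => h8; move/fa3: h9 => h9; move/fa1: h10 => h10; move/fa3: h11 => h11.
  move/fa3: h12 => h12.
  constructor.
  - by move=> x y; apply/eqP; apply: h1.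
  - by move=> x y; apply/eqP; apply: h2.
  - by move=> x y z; apply/eqP; apply: h3.
  - by move=> x y z; apply/eqP; apply: h4.
  - by move=> x y; apply/eqP; apply: h5.
  - by move=> x y; apply/eqP; apply: h6.
  - by move=> x; case/andP: (h7 x).
  - by move=> x; case/andP: (h7 x).
  - by move=> x y; apply/eqP; apply: h8.
  - by move=> x y z; apply/eqP; apply: h9.
  - by move=> x; apply/eqP; apply: h10.
  - by move=> x y z; move/implyP: (h11 x y z); apply.
  - by move=> x y z; move: (h12 x y z) => /eqP.
case=> h1 h2 h3 h4 h5 h6 h7 h7' h8 h9 h10 h11 h12.
apply/and3P; split; first (rewrite /bounded_lattice_ax; repeat (apply/andP; split)).
- by apply: af2 => x y; apply/eqP.
- by apply: af2 => x y; apply/eqP.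
- by apply: af3 => x y z; apply/eqP.
- by apply: af3 => x y z; apply/eqP.
- by apply: af2 => x y; apply/eqP.
- by apply: af2 => x y; apply/eqP.
- by apply: af1 => x; rewrite h7 h7'.
- rewrite /comm_ordered_monoid_ax; apply/and4P; split.
  + by apply: af2 => x y; apply/eqP.
  + by apply: af3 => x y z; apply/eqP.
  + by apply: af1 => x; apply/eqP.
  + by apply: af3 => x y z; apply/implyP; apply: h11.
- by rewrite /residuation_ax; apply: af3 => x y z; rewrite h12.
Qed.

Definition BLspec := [/\ RLspec, forall x y, (x → y) ∨ (y → x) = rone A &
                          forall x y, x ⊙ (x → y) = x ∧ y].
Definition MVspec := RLspec /\ forall x y, (x → y) → y = (y → x) → x.

Lemma BLP : reflect BLspec (is_BL A).
Proof.
apply: (iffP idP).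
  case/and3P => /RLP h /fa2 h1 /fa2 h2; split => // x y; exact/eqP.
case=> /RLP h h1 h2; apply/and3P; split => //; apply: af2 => x y; exact/eqP.
Qed.

Lemma MVP : reflect MVspec (is_MV A).
Proof.
apply: (iffP idP).
  case/andP => /RLP h /fa2 h1; split => // x y; exact/eqP.
case=> /RLP h h1; apply/andP; split => //; apply: af2 => x y; exact/eqP.
Qed.

Hypothesis H : RLspec.
Lemma meetI x : x ∧ x = x.
Proof. by rewrite -{2}(absJM H x x) (absMJ H). Qed.
Lemma le_refl x : le x x.
Proof. by rewrite /rle meetI. Qed.
Lemma le_anti x y : le x y -> le y x -> x = y.
Proof. by rewrite /rle => /eqP h1 /eqP h2; rewrite -h1 (meetC H) h2. Qed.
Lemma le_trans x y z : le x y -> le y z -> le x z.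
Proof.
rewrite /rle => /eqP h1 /eqP h2; apply/eqP.
by rewrite -{1}h1 -(meetA H) h2 h1.
Qed.
Lemma le_meetl x y : le (x ∧ y) x.
Proof. by rewrite /rle (meetC H) (meetA H) meetI. Qed.
Lemma le_meetr x y : le (x ∧ y) y.
Proof. by rewrite (meetC H) le_meetl. Qed.
Lemma le_meet w x y : le w x -> le w y -> le w (x ∧ y).
Proof. by rewrite /rle => /eqP h1 /eqP h2; rewrite (meetA H) h1 h2. Qed.
Lemma le_join_eq x w : le x w -> x ∨ w = w.
Proof. by rewrite /rle => /eqP h; rewrite -h (joinC H) (meetC H) (absJM H). Qed.
Lemma le_joinl x y : le x (x ∨ y).
Proof. by rewrite /rle (absMJ H). Qed.
Lemma le_joinr x y : le y (x ∨ y).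
Proof. by rewrite (joinC H) le_joinl. Qed.
Lemma le_join x y w : le x w -> le y w -> le (x ∨ y) w.
Proof.
move=> h1 h2; have e : (x ∨ y) ∨ w = w by rewrite -(joinA H) !le_join_eq.
by rewrite /rle -e (absMJ H).
Qed.
Lemma mulmonor x y z : le x y -> le (z ⊙ x) (z ⊙ y).
Proof. by move=> h; rewrite !(mulC H z); apply: (mulmono H). Qed.
Lemma le_mull x y : le (x ⊙ y) x.
Proof. by rewrite -{2}(mul1 H x); apply: mulmonor; apply: (le1 H). Qed.
Lemma le_mulr x y : le (x ⊙ y) y.
Proof. by rewrite (mulC H) le_mull. Qed.
Lemma mul0 x : x ⊙ rzero A = rzero A.
Proof. by apply: le_anti; [rewrite -(resid H) (le0 H) | apply: (le0 H)]. Qed.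
Lemma mul0l x : rzero A ⊙ x = rzero A.
Proof. by rewrite (mulC H) mul0. Qed.
Lemma mul1l x : rone A ⊙ x = x.
Proof. by rewrite (mulC H) (mul1 H). Qed.
Lemma imp_le x y : le (x ⊙ (x → y)) y.
Proof. by rewrite -(resid H) le_refl. Qed.
Lemma le_top x : le (rone A) x -> x = rone A.
Proof. by move=> h; apply: le_anti => //; apply: (le1 H). Qed.
Lemma le_bot x : le x (rzero A) -> x = rzero A.
Proof. by move=> h; apply: le_anti => //; apply: (le0 H). Qed.
End Spec.

Section Hom.
Variables (T U : finType) (A : RLops T) (B : RLops U) (f : T -> U).
Record homspec : Prop := {
  hM : forall x y, f (rmeet A x y) = rmeet B (f x) (f y);
  hJ : forall x y, f (rjoin A x y) = rjoin B (f x) (f y);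
  hP : forall x y, f (rmul A x y) = rmul B (f x) (f y);
  hI : forall x y, f (rimp A x y) = rimp B (f x) (f y);
  h0 : f (rzero A) = rzero B;
  h1 : f (rone A) = rone B }.

Lemma homP : reflect homspec (hom_ops A B f).
Proof.
apply: (iffP idP).
  case/and5P => /fa2 a1 /fa2 a2 /fa2 a3 /fa2 a4 /andP [/eqP a5 /eqP a6].
  by split=> // x y; apply/eqP.
case=> a1 a2 a3 a4 a5 a6; apply/and5P; split; try (by apply: af2 => x y; apply/eqP).
by apply/andP; split; apply/eqP.
Qed.

Variable g : U -> T.
Hypotheses (fK : cancel f g) (gK : cancel g f) (hf : homspec).

Lemma leF x y : rle B (f x) (f y) = rle A x y.
Proof. by rewrite /rle -(hM hf) (inj_eq (can_inj fK)). Qed.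

Ltac push := rewrite -?(h0 hf) -?(h1 hf);
  repeat (rewrite -?(hM hf) -?(hJ hf) -?(hP hf) -?(hI hf)); rewrite ?leF.

Lemma RL_transfer : RLspec A -> RLspec B.
Proof.
move=> H; constructor.
- by move=> u v; rewrite -(gK u) -(gK v); push; rewrite (meetC H).
- by move=> u v; rewrite -(gK u) -(gK v); push; rewrite (joinC H).
- by move=> u v w; rewrite -(gK u) -(gK v) -(gK w); push; rewrite (meetA H).
- by move=> u v w; rewrite -(gK u) -(gK v) -(gK w); push; rewrite (joinA H).
- by move=> u v; rewrite -(gK u) -(gK v); push; rewrite (absMJ H).
- by move=> u v; rewrite -(gK u) -(gK v); push; rewrite (absJM H).
- by move=> u; rewrite -(gK u); push; rewrite (le0 H).
- by move=> u; rewrite -(gK u); push; rewrite (le1 H).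
- by move=> u v; rewrite -(gK u) -(gK v); push; rewrite (mulC H).
- by move=> u v w; rewrite -(gK u) -(gK v) -(gK w); push; rewrite (mulA H).
- by move=> u; rewrite -(gK u); push; rewrite (mul1 H).
- by move=> u v w; rewrite -(gK u) -(gK v) -(gK w); push; apply: (mulmono H).
- by move=> u v w; rewrite -(gK u) -(gK v) -(gK w); push; rewrite (resid H).
Qed.

Lemma BL_transfer : BLspec A -> BLspec B.
Proof.
case=> H H1 H2; split; first exact: RL_transfer.
- by move=> u v; rewrite -(gK u) -(gK v); push; rewrite H1.
- by move=> u v; rewrite -(gK u) -(gK v); push; rewrite H2.
Qed.

Lemma MV_transfer : MVspec A -> MVspec B.
Proof.
case=> H H1; split; first exact: RL_transfer.
by move=> u v; rewrite -(gK u) -(gK v); push; rewrite H1.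
Qed.

End Hom.

Lemma hom_inv (T U : finType) (A : RLops T) (B : RLops U) (f : T -> U) (g : U -> T) :
  cancel f g -> cancel g f -> homspec A B f -> homspec B A g.
Proof.
move=> fK gK hf; split.
- by move=> u v; apply: (can_inj fK); rewrite gK (hM hf) !gK.
- by move=> u v; apply: (can_inj fK); rewrite gK (hJ hf) !gK.
- by move=> u v; apply: (can_inj fK); rewrite gK (hP hf) !gK.
- by move=> u v; apply: (can_inj fK); rewrite gK (hI hf) !gK.
- by apply: (can_inj fK); rewrite gK (h0 hf).
- by apply: (can_inj fK); rewrite gK (h1 hf).
Qed.

Lemma hom_comp (T U V : finType) (A : RLops T) (B : RLops U) (C : RLops V) f g :
  homspec A B f -> homspec B C g -> homspec A C (g \o f).
Proof.
move=> [a1 a2 a3 a4 a5 a6] [b1 b2 b3 b4 b5 b6]; split=> /=.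
- by move=> x y; rewrite a1 b1.
- by move=> x y; rewrite a2 b2.
- by move=> x y; rewrite a3 b3.
- by move=> x y; rewrite a4 b4.
- by rewrite a5 b5.
- by rewrite a6 b6.
Qed.

Lemma hom_ext (T U : finType) (A : RLops T) (B : RLops U) f g :
  f =1 g -> homspec A B f -> homspec A B g.
Proof. by move=> /functional_extensionality ->. Qed.

Definition pull (T U : finType) (A : RLops U) (g : T -> U) (h : U -> T) : RLops T :=
  RLOps (fun x y => h (rmeet A (g x) (g y))) (fun x y => h (rjoin A (g x) (g y)))
        (fun x y => h (rmul A (g x) (g y))) (fun x y => h (rimp A (g x) (g y)))
        (h (rzero A)) (h (rone A)).

Lemma pull_hom (T U : finType) (A : RLops U) (g : T -> U) (h : U -> T) :
  cancel h g -> homspec (pull A g h) A g.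
Proof. by move=> hK; split=> * /=; rewrite hK. Qed.

Lemma iso_transfer (T U : finType) (A : RLops T) (B : RLops U) f :
  bijective f -> homspec A B f ->
  [/\ is_RL A = is_RL B, is_BL A = is_BL B & is_MV A = is_MV B].
Proof.
case=> g fK gK hf; have hg := hom_inv fK gK hf.
split; apply/idP/idP.
- by move/RLP/(RL_transfer fK gK hf)/RLP.
- by move/RLP/(RL_transfer gK fK hg)/RLP.
- by move/BLP/(BL_transfer fK gK hf)/BLP.
- by move/BLP/(BL_transfer gK fK hg)/BLP.
- by move/MVP/(MV_transfer fK gK hf)/MVP.
- by move/MVP/(MV_transfer gK fK hg)/MVP.
Qed.
Section CDefs.
Variables (T : finType) (e : seq T) (A : RLops T).
Local Notation "x ∧ y" := (rmeet A x y) (at level 40).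
Local Notation "x ∨ y" := (rjoin A x y) (at level 40).
Local Notation "x ⊙ y" := (rmul A x y) (at level 40).
Local Notation "x → y" := (rimp A x y) (at level 40).
Local Notation rle := (rle A).
Local Notation "'A1' x , P" := (all (fun x => P) e) (at level 200, x name).

Definition bounded_lattice_c : bool :=
  [&& A1 x, A1 y, x ∧ y == y ∧ x,
      A1 x, A1 y, x ∨ y == y ∨ x,
      A1 x, A1 y, A1 z, x ∧ (y ∧ z) == (x ∧ y) ∧ z,
      A1 x, A1 y, A1 z, x ∨ (y ∨ z) == (x ∨ y) ∨ z,
      A1 x, A1 y, x ∧ (x ∨ y) == x,
      A1 x, A1 y, x ∨ (x ∧ y) == x &
      A1 x, rle (rzero A) x && rle x (rone A)].
Definition comm_ordered_monoid_c : bool :=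
  [&& A1 x, A1 y, x ⊙ y == y ⊙ x,
      A1 x, A1 y, A1 z, x ⊙ (y ⊙ z) == (x ⊙ y) ⊙ z,
      A1 x, x ⊙ rone A == x &
      A1 x, A1 y, A1 z, rle x y ==> rle (x ⊙ z) (y ⊙ z)].
Definition residuation_c : bool :=
  A1 x, A1 y, A1 z, rle z (x → y) == rle (x ⊙ z) y.
Definition is_RLc : bool := [&& bounded_lattice_c, comm_ordered_monoid_c & residuation_c].
Definition BLx : bool :=
  (A1 x, A1 y, (x → y) ∨ (y → x) == rone A) && (A1 x, A1 y, x ⊙ (x → y) == x ∧ y).
Definition MVx : bool := A1 x, A1 y, (x → y) → y == (y → x) → x.
End CDefs.

Definition hom_opsc (T U : finType) (e : seq T) (A : RLops T) (B : RLops U) (f : T -> U) : bool :=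
  [&& all (fun x => all (fun y => f (rmeet A x y) == rmeet B (f x) (f y)) e) e,
      all (fun x => all (fun y => f (rjoin A x y) == rjoin B (f x) (f y)) e) e,
      all (fun x => all (fun y => f (rmul A x y) == rmul B (f x) (f y)) e) e,
      all (fun x => all (fun y => f (rimp A x y) == rimp B (f x) (f y)) e) e,
      f (rzero A) == rzero B & f (rone A) == rone B].

Section Enum.
Variable n : nat.
Notation I := 'I_n.+1.
Fixpoint enum_down (i : nat) : i < n.+1 -> seq I :=
  match i as i0 return i0 < n.+1 -> seq I with
  | 0 => fun H => [:: Ordinal H]
  | j.+1 => fun H => Ordinal H :: @enum_down j (ltnW H)
  end.
Definition E : seq I := rev (@enum_down n (ltnSn n)).

Definition mids : seq I := [seq i <- E | (i != ord0) && (i != ord_max)].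
Definition Qp : seq (I * I) := [seq (i, j) | i : I <- mids, j : I <- [seq j <- mids | i != j]].
Definition P2 : seq (I * I) := [seq (i, j) | i : I <- mids, j : I <- [seq j : I <- mids | (i <= j)%N]].

Definition rel_of (bs : seq bool) (x y : I) : bool :=
  (x == ord0) || (y == ord_max) || (x == y) || nth false bs (index (x, y) Qp).

Definition mul_of (vs : seq I) (x y : I) : I :=
  if (x == ord0) || (y == ord0) then ord0
  else if x == ord_max then y else if y == ord_max then x
  else nth ord0 vs (index (if (x <= y)%N then (x, y) else (y, x)) P2).

Definition best (P : pred I) (r : rel I) : I :=
  head ord0 [seq z <- E | P z && all (fun w => P w ==> r w z) E].

Definition build (r : rel I) (p : I -> I -> I) : RLops I :=
  RLOps (fun x y => best (fun z => r z x && r z y) r)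
        (fun x y => best (fun z => r x z && r y z) (fun a b => r b a))
        p (fun x y => best (fun z => r (p x z) y) r) ord0 ord_max.

Definition tabulate (A : Type) (f : I -> I -> A) : seq (seq A) := [seq [seq f x y | y <- E] | x <- E].
Definition lookup (A : Type) (d : A) (t : seq (seq A)) (x y : I) : A := nth d (nth [::] t x) y.
Definition build_t (r : rel I) (p : I -> I -> I) : RLops I :=
  let rt := tabulate r in let r' := lookup false rt in
  let pt := tabulate p in let p' := lookup ord0 pt in
  let mt := tabulate (fun x y => best (fun z => r' z x && r' z y) r') in
  let jt := tabulate (fun x y => best (fun z => r' x z && r' y z) (fun a b => r' b a)) in
  let it := tabulate (fun x y => best (fun z => r' (p' x z) y) r') in
  RLOps (lookup ord0 mt) (lookup ord0 jt) p' (lookup ord0 it) ord0 ord_max.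

Definition order_ok (r : rel I) : bool :=
  all (fun x => all (fun y => (r x y && r y x) ==> (x == y)) E) E &&
  all (fun x => all (fun y => all (fun z => (r x y && r y z) ==> r x z) E) E) E.

Fixpoint forall_assign (V : Type) (vals : seq V) (k : nat) (g : seq V -> V -> bool)
   (leaf : seq V -> bool) (acc : seq V) : bool :=
  match k with
  | 0 => leaf acc
  | k'.+1 => all (fun v => if g acc v then forall_assign vals k' g leaf (rcons acc v) else true) vals
  end.

Definition isob (t1 t2 : RLops I) : bool :=
  has (fun l => hom_opsc E t1 t2 (fun x => nth ord0 l x)) (permutations E).
Definition isoto (t : RLops I) (reps : seq (RLops I)) := has (fun r => isob r t) reps.

Definition classify (BLr MVr : seq (RLops I)) (t : RLops I) : bool :=
  if is_RLc E t then (if BLx E t then isoto t BLr else true) && (if MVx E t then isoto t MVr else true)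
  else true.

Definition mulguard (r : rel I) (acc : seq I) (v : I) :=
  let ij := nth (ord0, ord0) P2 (size acc) in r v ij.1 && r v ij.2.

Definition checker (BLr MVr : seq (RLops I)) : bool :=
  forall_assign [:: true; false] (size Qp) (fun _ _ => true)
   (fun bs => let rt := tabulate (rel_of bs) in let r := lookup false rt in
      if order_ok r then
        forall_assign E (size P2) (mulguard r)
          (fun vs => classify BLr MVr (build_t r (mul_of vs))) [::]
      else true) [::].

Definition alg_of (t : RLops I) : alg n.+1 :=
  ([ffun xy : I * I => rmeet t xy.1 xy.2], [ffun xy : I * I => rjoin t xy.1 xy.2],
   [ffun xy : I * I => rmul t xy.1 xy.2], [ffun xy : I * I => rimp t xy.1 xy.2],
   rzero t, rone t).
End Enum.

Definition tab (n : nat) (l : seq (seq nat)) (x y : 'I_n.+1) : 'I_n.+1 := nth ord0 (E n) (nth 0 (nth [::] l x) y).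
Definition rtab (n : nat) (l : seq (seq bool)) (x y : 'I_n.+1) : bool := nth false (nth [::] l x) y.
Definition mkrep (n : nat) (o : seq (seq bool)) (m : seq (seq nat)) : RLops 'I_n.+1 :=
  build_t (@rtab n o) (@tab n m).

Section CompEq.
Variables (T : finType) (e : seq T) (He : forall x, x \in e).
Ltac fa := repeat first [ reflexivity | congr (_ && _) | apply: (forall_all He) => ? ].
Lemma RL_c (A : RLops T) : is_RL A = is_RLc e A.
Proof.
rewrite /is_RL /is_RLc /bounded_lattice_ax /bounded_lattice_c /comm_ordered_monoid_ax
  /comm_ordered_monoid_c /residuation_ax /residuation_c; fa.
Qed.
Lemma BL_c (A : RLops T) : is_BL A = is_RLc e A && BLx e A.
Proof. by rewrite /is_BL RL_c /BLx; fa. Qed.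
Lemma MV_c (A : RLops T) : is_MV A = is_RLc e A && MVx e A.
Proof. by rewrite /is_MV RL_c /MVx; fa. Qed.
Lemma hom_c (U : finType) (A : RLops T) (B : RLops U) f : hom_ops A B f = hom_opsc e A B f.
Proof. by rewrite /hom_ops /hom_opsc; fa. Qed.
End CompEq.

Section ELemmas.
Variable n : nat.
Notation I := 'I_n.+1.
Notation E := (E n).

Lemma val_enum_down i (H : i < n.+1) : map val (enum_down H) = rev (iota 0 i.+1).
Proof.
elim: i H => [|i IH] H; first by [].
have E2 : iota 0 i.+2 = rcons (iota 0 i.+1) i.+1.
  by rewrite -cats1 -addn1 iotaD.
by rewrite E2 rev_rcons /= IH.
Qed.
Lemma val_E : map val E = iota 0 n.+1.
Proof. by rewrite /E map_rev val_enum_down revK. Qed.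
Lemma mem_E (x : I) : x \in E.
Proof. by rewrite -(mem_map val_inj) val_E mem_iota /= add0n ltn_ord. Qed.
Lemma uniq_E : uniq E.
Proof. by rewrite -(map_inj_uniq val_inj) val_E iota_uniq. Qed.
Lemma size_E : size E = n.+1.
Proof. by rewrite -(size_map val) val_E size_iota. Qed.
Lemma nth_E (x : I) : nth ord0 E x = x.
Proof.
apply: val_inj => /=; rewrite -(nth_map ord0 0) ?size_E ?ltn_ord //.
by rewrite val_E nth_iota ?add0n ?ltn_ord.
Qed.
Lemma nth_E_nat (i : nat) (Hi : i < n.+1) : val (nth ord0 E i) = i.
Proof. by rewrite -(nth_map ord0 0) ?size_E // val_E nth_iota. Qed.

Lemma lookup_tab (A : Type) (d : A) (f : I -> I -> A) : lookup d (tabulate f) = f.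
Proof.
apply: functional_extensionality => x; apply: functional_extensionality => y.
rewrite /lookup /tabulate (nth_map ord0) ?size_E ?ltn_ord // nth_E.
by rewrite (nth_map ord0) ?size_E ?ltn_ord // nth_E.
Qed.

Lemma build_tE (r : rel I) (p : I -> I -> I) : build_t r p = build r p.
Proof. by rewrite /build_t !lookup_tab. Qed.
End ELemmas.

Fixpoint guards (V : Type) (g : seq V -> V -> bool) (acc vs : seq V) : Prop :=
  match vs with [::] => True | v :: vs' => g acc v /\ guards g (rcons acc v) vs' end.

Lemma forall_assignP (V : eqType) (vals : seq V) g leaf (vs acc : seq V) :
  forall_assign vals (size vs) g leaf acc -> guards g acc vs -> {subset vs <= vals} ->
  leaf (acc ++ vs).
Proof.
elim: vs acc => [|v vs IH] acc /=; first by rewrite cats0.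
move=> /allP H [gv gs] sub; have := H v (sub v (mem_head _ _)); rewrite gv => /IH.
rewrite cat_rcons; apply => // x xin; apply: sub; by rewrite inE xin orbT.
Qed.

Lemma guards_idx (V : Type) (G : nat -> V -> bool) d (vs acc : seq V) :
  (forall i, i < size vs -> G (size acc + i) (nth d vs i)) ->
  guards (fun acc v => G (size acc) v) acc vs.
Proof.
elim: vs acc => //= v vs IH acc H; split; first by have := H 0 erefl; rewrite addn0.
apply: IH => i Hi; rewrite size_rcons; have := H i.+1 Hi; by rewrite addnS.
Qed.

Lemma guards_true (V : Type) (vs acc : seq V) : guards (fun _ _ => true) acc vs.
Proof. by elim: vs acc => //= v vs IH acc; split. Qed.

Section Classify.
Variable n : nat.
Notation I := 'I_n.+1.
Notation E := (E n).

Lemma bestE (P : pred I) (r : rel I) z0 : P z0 -> (forall w, P w -> r w z0) ->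
  (forall z, P z -> (forall w, P w -> r w z) -> z = z0) -> best P r = z0.
Proof.
move=> Pz0 Hz0 U; rewrite /best.
have z0s : z0 \in [seq z <- E | P z && all (fun w => P w ==> r w z) E].
  rewrite mem_filter mem_E andbT Pz0 /=; apply/allP => w _; apply/implyP; exact: Hz0.
have alleq : forall z, z \in [seq z <- E | P z && all (fun w => P w ==> r w z) E] -> z = z0.
  move=> z; rewrite mem_filter => /andP [/andP [Pz /allP H] _]; apply: U => // w Pw.
  exact: (implyP (H w (mem_E w)) Pw).
move: z0s alleq; case: [seq z <- E | _] => //= a s _ H; apply: H; exact: mem_head.
Qed.

Lemma build_self (t : RLops I) : RLspec t -> rzero t = ord0 -> rone t = ord_max ->
  build (rle t) (rmul t) = t.
Proof.
move=> H z0 o1; case: t H z0 o1 => m j p i z o H /= z0 o1; subst z o; rewrite /build.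
congr RLOps.
- apply: functional_extensionality => x; apply: functional_extensionality => y.
  apply: bestE.
  + by rewrite (le_meetl H) (le_meetr H).
  + by move=> w /andP [h1 h2]; apply: le_meet.
  + move=> z /andP [h1 h2] Hz; apply: (le_anti H).
      by apply: le_meet.
    by apply: Hz; rewrite (le_meetl H) (le_meetr H).
- apply: functional_extensionality => x; apply: functional_extensionality => y.
  apply: bestE.
  + by rewrite (le_joinl H) (le_joinr H).
  + by move=> w /andP [h1 h2]; apply: le_join.
  + move=> z /andP [h1 h2] Hz; apply: (le_anti H).
      by apply: Hz; rewrite (le_joinl H) (le_joinr H).
    by apply: le_join.
- apply: functional_extensionality => x; apply: functional_extensionality => y.
  apply: bestE.
  + exact: (imp_le H).
  + by move=> w hw; rewrite (resid H).
  + move=> z hz Hz; apply: (le_anti H).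
      by rewrite (resid H).
    by apply: Hz; apply: (imp_le H).
Qed.
End Classify.

Lemma nth_map_index (A : eqType) (B : Type) (f : A -> B) (s : seq A) d z :
  z \in s -> nth d (map f s) (index z s) = f z.
Proof. by move=> zs; rewrite (nth_map z) ?index_mem // nth_index. Qed.
Lemma nth_map_notin (A : eqType) (B : Type) (f : A -> B) (s : seq A) d z :
  z \notin s -> nth d (map f s) (index z s) = d.
Proof. by move=> zs; rewrite nth_default // size_map memNindex. Qed.

Section RelMul.
Variable n : nat.
Notation I := 'I_n.+1.
Lemma mem_mids (x : I) : (x \in mids n) = (x != ord0) && (x != ord_max).
Proof. by rewrite mem_filter mem_E andbT. Qed.
Lemma mem_Qp (x y : I) : ((x, y) \in Qp n) = [&& x \in mids n, y \in mids n & x != y].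
Proof.
apply/allpairsPdep/idP => [[a [b [ha hb [-> ->]]]]|/and3P [hx hy hxy]].
  by move: hb; rewrite mem_filter => /andP [-> ->]; rewrite ha.
by exists x, y; split => //; rewrite mem_filter hxy.
Qed.
Lemma mem_P2 (x y : I) : ((x, y) \in P2 n) = [&& x \in mids n, y \in mids n & (x <= y)%N].
Proof.
apply/allpairsPdep/idP => [[a [b [ha hb [-> ->]]]]|/and3P [hx hy hxy]].
  by move: hb; rewrite mem_filter => /andP [-> ->]; rewrite ha.
by exists x, y; split => //; rewrite mem_filter hxy.
Qed.

Variables (t : RLops I) (H : RLspec t) (z0 : rzero t = ord0) (o1 : rone t = ord_max).

Lemma rel_ofE : rel_of [seq rle t ij.1 ij.2 | ij <- Qp n] =2 rle t.
Proof.
move=> x y; rewrite /rel_of.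
case: (eqVneq x ord0) => [->|x0] /=; first by rewrite -z0 (le0 H).
case: (eqVneq y ord_max) => [->|y1] /=; first by rewrite -o1 (le1 H).
case: (eqVneq x y) => [->|xy] /=; first by rewrite (le_refl H).
case: (eqVneq x ord_max) => [->|x1].
  rewrite nth_map_notin ?mem_Qp ?mem_mids ?eqxx ?andbF //.
  apply/esym/negP; rewrite -{1}o1 => /(le_top H); rewrite o1 => E1.
  by move: y1; rewrite E1 eqxx.
case: (eqVneq y ord0) => [->|y0].
  rewrite nth_map_notin ?mem_Qp ?mem_mids ?eqxx ?andbF //.
  apply/esym/negP; rewrite -z0 => /(le_bot H); rewrite z0 => E1.
  by move: x0; rewrite E1 eqxx.
by rewrite nth_map_index // mem_Qp !mem_mids x0 x1 y0 y1 xy.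
Qed.

Lemma mul_ofE : mul_of [seq rmul t ij.1 ij.2 | ij <- P2 n] =2 rmul t.
Proof.
move=> x y; rewrite /mul_of.
case: (eqVneq x ord0) => [->|x0] /=; first by rewrite -z0 (mul0l H).
case: (eqVneq y ord0) => [->|y0] /=; first by rewrite -z0 (mul0 H).
case: (eqVneq x ord_max) => [->|x1] /=; first by rewrite -o1 (mul1l H).
case: (eqVneq y ord_max) => [->|y1] /=; first by rewrite -o1 (mul1 H).
case: leqP => hxy.
  by rewrite nth_map_index // mem_P2 !mem_mids x0 x1 y0 y1 hxy.
rewrite nth_map_index /=; first by rewrite (mulC H).
by rewrite mem_P2 !mem_mids x0 x1 y0 y1 /= ltnW.
Qed.

Lemma order_okE : order_ok (rle t).
Proof.
apply/andP; split; apply/allP => x _; apply/allP => y _.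
  by apply/implyP => /andP [h1 h2]; apply/eqP; apply: (le_anti H).
by apply/allP => z _; apply/implyP => /andP [h1 h2]; apply: (le_trans H h1 h2).
Qed.
End RelMul.

Fixpoint memP (A : Type) (x : A) (s : seq A) : Prop :=
  if s is y :: s' then x = y \/ memP x s' else False.
Lemma hasPP (A : Type) (p : A -> bool) (s : seq A) : has p s -> exists2 x, memP x s & p x.
Proof.
elim: s => //= y s IH /orP [py|/IH [x xs px]]; first by exists y => //; left.
by exists x => //; right.
Qed.

Section Main.
Variable n : nat.
Notation I := 'I_n.+1.
Notation E := (E n).

Lemma nth_perm_inj (l : seq I) : l \in permutations E -> injective (fun x : I => nth ord0 l x).
Proof.
rewrite mem_permutations => pl x y /eqP.
have ul : uniq l by rewrite (perm_uniq pl) uniq_E.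
have sl : size l = n.+1 by rewrite (perm_size pl) size_E.
by rewrite nth_uniq ?sl ?ltn_ord // => /eqP /ord_inj.
Qed.

Lemma from_isoto (reps : seq (RLops I)) (t t' : RLops I) (g : I -> I) :
  isoto t' reps -> homspec t' t g -> injective g ->
  exists2 r, memP r reps & exists f, bijective f /\ homspec r t f.
Proof.
rewrite /isoto => /hasPP [r rin]; rewrite /isob => /hasP [l lin hl] hg ig; exists r => //.
exists (g \o (fun x : I => nth ord0 l x)); split.
  by apply: injF_bij; apply: inj_comp => //; exact: nth_perm_inj.
by apply: hom_comp hg; apply/homP; rewrite (hom_c (@mem_E n)).
Qed.

Variables (BLr MVr : seq (RLops I)).
Hypothesis Hc : checker BLr MVr.

Lemma classify_norm (t : RLops I) : RLspec t -> rzero t = ord0 -> rone t = ord_max ->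
  classify BLr MVr t.
Proof.
move=> H z0 o1.
pose bs := [seq rle t ij.1 ij.2 | ij <- Qp n].
pose vs := [seq rmul t ij.1 ij.2 | ij <- P2 n].
have Hr : rel_of bs = rle t.
  by apply: functional_extensionality => x; apply: functional_extensionality => y; apply: rel_ofE.
have Hp : mul_of vs = rmul t.
  by apply: functional_extensionality => x; apply: functional_extensionality => y; apply: mul_ofE.
have := @forall_assignP _ [:: true; false] (fun _ _ => true) _ bs [::].
rewrite size_map => /(_ _ Hc (guards_true _ _)).
have sub : {subset bs <= [:: true; false]} by move=> b; case: b.
move=> /(_ sub) /=; rewrite lookup_tab Hr order_okE //.
move=> Hl.
have := @forall_assignP _ E (mulguard (rle t))
   (fun vs => classify BLr MVr (build_t (rle t) (mul_of vs))) vs [::].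
rewrite size_map => /(_ Hl).
have G : guards (mulguard (rle t)) [::] vs.
  apply: (@guards_idx _ (fun k v => let ij := nth (ord0, ord0) (P2 n) k in
                                    rle t v ij.1 && rle t v ij.2) ord0).
  move=> i; rewrite size_map => Hi; rewrite (nth_map (ord0, ord0)) // add0n /=.
  by rewrite (le_mull H) (le_mulr H).
move=> /(_ G) /(_ (fun x _ => mem_E x)) /=.
by rewrite build_tE Hp build_self.
Qed.

Hypothesis n0 : 0 < n.

Lemma classification (t : RLops I) : RLspec t ->
  (is_BL t -> exists2 r, memP r BLr & exists f, bijective f /\ homspec r t f) /\
  (is_MV t -> exists2 r, memP r MVr & exists f, bijective f /\ homspec r t f).
Proof.
move=> H.
have zo : rzero t != rone t.
  apply/eqP => E1.
  have a : (ord0 : I) = rzero t by apply: (le_bot H); rewrite E1 (le1 H).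
  have b : (ord_max : I) = rzero t by apply: (le_bot H); rewrite E1 (le1 H).
  by move: (congr1 val (etrans a (esym b))) => /= e; move: n0; rewrite -e.
pose s1 := tperm (rzero t) (ord0 : I).
pose o' := s1 (rone t).
have o'0 : o' != ord0.
  by rewrite -[ord0 : I](tpermL (rzero t)) (inj_eq perm_inj) eq_sym.
have m0 : (ord_max : I) != ord0.
  by apply/eqP => /(congr1 val) /= e; move: n0; rewrite e.
pose s2 := tperm o' (ord_max : I).
pose s := (s1 * s2)%g.
have sz : s (rzero t) = ord0 by rewrite permM tpermL tpermD // eq_sym.
have so : s (rone t) = ord_max by rewrite permM tpermL.
pose t' := pull t (s^-1)%g s.
have hg : homspec t' t (s^-1)%g := pull_hom t (permK s).
have hh : homspec t t' s := hom_inv (permKV s) (permK s) hg.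
have H' : RLspec t' := RL_transfer (permK s) (permKV s) hh H.
have [_ eBL eMV] := iso_transfer (injF_bij (@perm_inj _ s)) hh.
have C := classify_norm H' sz so.
rewrite /classify -(RL_c (@mem_E n)) in C.
have RLt' : is_RL t' by apply/RLP.
rewrite RLt' in C; case/andP: C => C1 C2.
split => HB.
  move: HB; rewrite eBL (BL_c (@mem_E n)) => /andP [_ BX]; rewrite BX in C1.
  exact: from_isoto C1 hg (@perm_inj _ _).
move: HB; rewrite eMV (MV_c (@mem_E n)) => /andP [_ BX]; rewrite BX in C2.
exact: from_isoto C2 hg (@perm_inj _ _).
Qed.
End Main.

Lemma memP_map (A : Type) (B : eqType) (f : A -> B) (s : seq A) x :
  memP x s -> f x \in map f s.
Proof. by elim: s => //= y s IH [->|/IH h]; rewrite inE ?eqxx ?h ?orbT. Qed.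
Lemma map_memP (A : Type) (B : eqType) (f : A -> B) (s : seq A) y :
  y \in map f s -> exists2 x, memP x s & y = f x.
Proof.
elim: s => //= x s IH; rewrite inE => /orP [/eqP ->|/IH [z zs ->]]; first by exists x => //; left.
by exists z => //; right.
Qed.
Lemma memP_all (A : Type) (p : A -> bool) (s : seq A) x : all p s -> memP x s -> p x.
Proof. by elim: s => //= y s IH /andP [py ps] [->|/IH]; auto. Qed.

Lemma sub_pw (T : Type) (r1 r2 : rel T) (s : seq T) :
  (forall x y, r1 x y -> r2 x y) -> pairwise r1 s -> pairwise r2 s.
Proof.
move=> sub; elim: s => //= x s IH /andP [a p]; rewrite IH // andbT.
by apply: sub_all a => y; apply: sub.
Qed.
Lemma pw_in (T : eqType) (r : rel T) (s : seq T) x y :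
  pairwise r s -> x \in s -> y \in s -> x != y -> r x y || r y x.
Proof.
elim: s => //= z s IH /andP [/allP a p]; rewrite !inE.
case/orP => [/eqP ->|xs]; case/orP => [/eqP ->|ys]; rewrite ?eqxx //.
- by move=> _; rewrite a.
- by move=> _; rewrite a ?orbT.
- exact: IH.
Qed.

Section Iso.
Lemma to_ops_alg_of n (t : RLops 'I_n.+1) : to_ops (alg_of t) = t.
Proof.
case: t => m j p i z o; rewrite /alg_of /to_ops /=.
by congr RLOps; do 2 (apply: functional_extensionality => ?); rewrite ffunE.
Qed.

Variable m : nat.
Implicit Types a b c : alg m.
Lemma iso_refl a : iso_alg a a.
Proof. by apply/existsP; exists 1%g; apply/homP; split => * /=; rewrite !perm1. Qed.
Lemma iso_sym a b : iso_alg a b -> iso_alg b a.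
Proof.
case/existsP => s /homP h; apply/existsP; exists (s^-1)%g; apply/homP.
exact: hom_inv (permK s) (permKV s) h.
Qed.
Lemma iso_trans a b c : iso_alg a b -> iso_alg b c -> iso_alg a c.
Proof.
case/existsP => s /homP h1 /existsP [s' /homP h2]; apply/existsP; exists (s * s')%g.
apply/homP; apply: hom_ext (hom_comp h1 h2) => x /=; by rewrite permM.
Qed.
End Iso.

Lemma iso_isob n (t1 t2 : RLops 'I_n.+1) : iso_alg (alg_of t1) (alg_of t2) -> isob t1 t2.
Proof.
case/existsP => s; rewrite !to_ops_alg_of => h.
apply/hasP; exists (map s (E n)).
  rewrite mem_permutations; apply: uniq_perm.
  - by rewrite map_inj_uniq ?uniq_E //; apply: perm_inj.
  - exact: uniq_E.
  - move=> x; rewrite mem_E; apply/mapP; exists ((s^-1)%g x); first exact: mem_E.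
    by rewrite permKV.
rewrite -(hom_c (@mem_E n)); move: h; congr hom_ops.
apply: functional_extensionality => x.
by rewrite (nth_map ord0) ?size_E ?ltn_ord // nth_E.
Qed.

Lemma hom_iso n (a : alg n.+1) (r : RLops 'I_n.+1) f :
  bijective f -> homspec r (to_ops a) f -> iso_alg (alg_of r) a.
Proof.
move=> /bij_inj fi h; apply/existsP; exists (perm fi); rewrite to_ops_alg_of.
by apply/homP; apply: hom_ext h => x; rewrite permE.
Qed.

Lemma count_classes n (P : forall T : finType, RLops T -> bool) (R : seq (alg n)) :
  (forall r, r \in R -> P _ (to_ops r)) -> pairwise (fun a b => ~~ iso_alg a b) R ->
  (forall a, P _ (to_ops a) -> exists2 r, r \in R & iso_alg r a) -> num_classes n P = size R.
Proof.
move=> PR pw cpl; rewrite /num_classes.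
set S := [set a : alg n | P _ (to_ops a)].
pose cls a := [set b in S | iso_alg a b].
have uR : uniq R by apply: pairwise_uniq pw => a; rewrite /= iso_refl.
have E1 : [set [set b in S | iso_alg a b] | a in S] = [set cls r | r in R].
  apply/setP => X; apply/imsetP/imsetP => [[a aS ->]|[r rR ->]].
    move: aS; rewrite inE => /cpl [r rR ira]; exists r => //.
    apply/setP => b; rewrite !inE; congr (_ && _).
    by apply/idP/idP => h; [apply: iso_trans ira h | apply: iso_trans (iso_sym ira) h].
  by exists r => //; rewrite inE PR.
rewrite E1 card_in_imset; first by apply/card_uniqP.
move=> r1 r2 r1R r2R e; apply/eqP; apply/negPn/negP => ne.
have : r2 \in cls r1 by rewrite e inE iso_refl inE PR.
rewrite inE => /andP [_ i12]; have := pw_in pw r1R r2R ne.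
by rewrite i12 (iso_sym i12).
Qed.

Section Pi.
Variable n : nat.
Notation J := 'I_n.+1.
Variable e : {ffun J -> J}.
Hypothesis H0 : forall d : J, (d <= 1)%N -> e d = ord0.
Hypothesis Hprod : \prod_(d : J) d ^ e d = n.
Lemma dec_dvd (d : J) : (0 < e d)%N -> (1 < d)%N /\ (d %| n)%N.
Proof.
move=> pos; split.
  by rewrite ltnNge; apply/negP => /H0 h; rewrite h in pos.
have h : (d %| \prod_(d' : J) d' ^ e d')%N by rewrite (bigD1 d) //= dvdn_mulr // dvdn_exp.
by rewrite Hprod in h.
Qed.
End Pi.

Lemma pi_dec_prime n : prime n -> pi_dec n = 0.
Proof.
move=> pn; rewrite /pi_dec; apply/eqP; rewrite cards_eq0; apply/eqP/setP => e; rewrite !inE.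
apply/negbTE/negP => /and3P [/forallP H0 /eqP Hprod Hsum].
have H0' : forall d : 'I_n.+1, (d <= 1)%N -> e d = ord0.
  by move=> d hd; apply/eqP; apply: (implyP (H0 d)).
have Z : forall d : 'I_n.+1, d != ord_max -> (e d : nat) = 0.
  move=> d dn; apply/eqP; rewrite -leqn0 leqNgt; apply/negP => pos.
  have [d1 dd] := dec_dvd H0' Hprod pos.
  have d1' : (d : nat) != 1 by rewrite neq_ltn d1 orbT.
  have dv : (d : nat) = n by apply/(prime_nt_dvdP pn d1').
  by move: dn; rewrite (_ : d = ord_max) ?eqxx //; apply: ord_inj.
have Sum : \sum_(d : 'I_n.+1) e d = e ord_max.
  by rewrite (bigD1 ord_max) //= big1 ?addn0 // => d /Z.
have Prod : \prod_(d : 'I_n.+1) d ^ e d = n ^ e ord_max.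
  by rewrite (bigD1 ord_max) //= big1 ?muln1 // => d /Z ->.
have e1 : (e ord_max : nat) = 1.
  by apply/eqP; rewrite -(eqn_exp2l _ _ (prime_gt1 pn)) expn1 -Prod Hprod.
by move: Hsum; rewrite Sum e1.
Qed.

Lemma key4 (a b : nat) : (a < 5)%N -> (b < 5)%N -> (2 ^ a * 4 ^ b == 4)%N -> (1 < a + b)%N ->
  a = 2 /\ b = 0.
Proof. by move: a b => [|[|[|[|[|a]]]]] [|[|[|[|[|b]]]]]. Qed.

Lemma pi_dec4 : pi_dec 4 = 1.
Proof.
pose d2 : 'I_5 := inord 2.
have v2 : (d2 : nat) = 2 by rewrite inordK.
pose e0 : {ffun 'I_5 -> 'I_5} := [ffun d => if d == d2 then d2 else ord0].
rewrite /pi_dec; apply/eqP/cards1P; exists e0; apply/setP => e; rewrite !inE.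
apply/idP/idP.
  case/and3P => /forallP H0 /eqP Hprod Hsum.
  have H0' : forall d : 'I_5, (d <= 1)%N -> e d = ord0.
    by move=> d hd; apply/eqP; apply: (implyP (H0 d)).
  have Z : forall d : 'I_5, d != d2 -> d != ord_max -> (e d : nat) = 0.
    move=> d dn dm; apply/eqP; rewrite -leqn0 leqNgt; apply/negP => pos.
    have [d1 dd] := dec_dvd H0' Hprod pos.
    move: dn dm d1 dd; rewrite -(inj_eq val_inj) /= v2 -(inj_eq val_inj) /=; clear pos.
    by case: d => -[|[|[|[|[|?]]]]].
  have m2 : (ord_max : 'I_5) != d2 by rewrite -(inj_eq val_inj) /= v2.
  have Sum : \sum_(d : 'I_5) e d = e d2 + e ord_max.
    rewrite (bigD1 d2) //= (bigD1 ord_max) //= big1 ?addn0 // => d /andP [dn dm].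
    exact: Z.
  have Prod : \prod_(d : 'I_5) d ^ e d = 2 ^ e d2 * 4 ^ e ord_max.
    rewrite (bigD1 d2) //= (bigD1 ord_max) //= big1 ?muln1 ?v2 // => d /andP [dn dm].
    by rewrite Z.
  have [a2 b0] := key4 (ltn_ord (e d2)) (ltn_ord (e ord_max)) (introT eqP (etrans (esym Prod) Hprod))
       (etrans (esym (congr1 (leq 2) Sum)) Hsum).
  apply/eqP/ffunP => d; rewrite ffunE; case: (eqVneq d d2) => [->|dn].
    by apply: val_inj => /=; rewrite a2 v2.
  apply: val_inj => /=; case: (eqVneq d ord_max) => [->|dm]; first by rewrite b0.
  exact: Z.
move/eqP => ->; apply/and3P; split.
- apply/forallP => d; apply/implyP => hd; rewrite ffunE.
  by case: (eqVneq d d2) => // e2; move: hd; rewrite e2 v2.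
- rewrite (bigD1 d2) //= big1 ?muln1 ?ffunE ?eqxx ?v2 //.
  by move=> d dn; rewrite ffunE (negbTE dn) expn0.
- rewrite (bigD1 d2) //= big1 ?addn0 ?ffunE ?eqxx ?v2 //.
  by move=> d dn; rewrite ffunE (negbTE dn).
Qed.
Definition L2 : RLops 'I_2 := mkrep 1 [:: [:: true; true]; [:: false; true]] [:: [:: 0; 0]; [:: 0; 1]].
Definition L3 : RLops 'I_3 := mkrep 2 [:: [:: true; true; true]; [:: false; true; true]; [:: false; false; true]] [:: [:: 0; 0; 0]; [:: 0; 0; 1]; [:: 0; 1; 2]].
Definition G3 : RLops 'I_3 := mkrep 2 [:: [:: true; true; true]; [:: false; true; true]; [:: false; false; true]] [:: [:: 0; 0; 0]; [:: 0; 1; 1]; [:: 0; 1; 2]].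
Definition L4 : RLops 'I_4 := mkrep 3 [:: [:: true; true; true; true]; [:: false; true; true; true]; [:: false; false; true; true]; [:: false; false; false; true]] [:: [:: 0; 0; 0; 0]; [:: 0; 0; 0; 1]; [:: 0; 0; 1; 2]; [:: 0; 1; 2; 3]].
Definition L2L3 : RLops 'I_4 := mkrep 3 [:: [:: true; true; true; true]; [:: false; true; true; true]; [:: false; false; true; true]; [:: false; false; false; true]] [:: [:: 0; 0; 0; 0]; [:: 0; 1; 1; 1]; [:: 0; 1; 1; 2]; [:: 0; 1; 2; 3]].
Definition L3L2 : RLops 'I_4 := mkrep 3 [:: [:: true; true; true; true]; [:: false; true; true; true]; [:: false; false; true; true]; [:: false; false; false; true]] [:: [:: 0; 0; 0; 0]; [:: 0; 0; 1; 1]; [:: 0; 1; 2; 2]; [:: 0; 1; 2; 3]].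
Definition G4 : RLops 'I_4 := mkrep 3 [:: [:: true; true; true; true]; [:: false; true; true; true]; [:: false; false; true; true]; [:: false; false; false; true]] [:: [:: 0; 0; 0; 0]; [:: 0; 1; 1; 1]; [:: 0; 1; 2; 2]; [:: 0; 1; 2; 3]].
Definition L5 : RLops 'I_5 := mkrep 4 [:: [:: true; true; true; true; true]; [:: false; true; true; true; true]; [:: false; false; true; true; true]; [:: false; false; false; true; true]; [:: false; false; false; false; true]] [:: [:: 0; 0; 0; 0; 0]; [:: 0; 0; 0; 0; 1]; [:: 0; 0; 0; 1; 2]; [:: 0; 0; 1; 2; 3]; [:: 0; 1; 2; 3; 4]].
Definition L2L4 : RLops 'I_5 := mkrep 4 [:: [:: true; true; true; true; true]; [:: false; true; true; true; true]; [:: false; false; true; true; true]; [:: false; false; false; true; true]; [:: false; false; false; false; true]] [:: [:: 0; 0; 0; 0; 0]; [:: 0; 1; 1; 1; 1]; [:: 0; 1; 1; 1; 2]; [:: 0; 1; 1; 2; 3]; [:: 0; 1; 2; 3; 4]].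
Definition L4L2 : RLops 'I_5 := mkrep 4 [:: [:: true; true; true; true; true]; [:: false; true; true; true; true]; [:: false; false; true; true; true]; [:: false; false; false; true; true]; [:: false; false; false; false; true]] [:: [:: 0; 0; 0; 0; 0]; [:: 0; 0; 0; 1; 1]; [:: 0; 0; 1; 2; 2]; [:: 0; 1; 2; 3; 3]; [:: 0; 1; 2; 3; 4]].
Definition L3L3 : RLops 'I_5 := mkrep 4 [:: [:: true; true; true; true; true]; [:: false; true; true; true; true]; [:: false; false; true; true; true]; [:: false; false; false; true; true]; [:: false; false; false; false; true]] [:: [:: 0; 0; 0; 0; 0]; [:: 0; 0; 1; 1; 1]; [:: 0; 1; 2; 2; 2]; [:: 0; 1; 2; 2; 3]; [:: 0; 1; 2; 3; 4]].
Definition L2L2L3 : RLops 'I_5 := mkrep 4 [:: [:: true; true; true; true; true]; [:: false; true; true; true; true]; [:: false; false; true; true; true]; [:: false; false; false; true; true]; [:: false; false; false; false; true]] [:: [:: 0; 0; 0; 0; 0]; [:: 0; 1; 1; 1; 1]; [:: 0; 1; 2; 2; 2]; [:: 0; 1; 2; 2; 3]; [:: 0; 1; 2; 3; 4]].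
Definition L2L3L2 : RLops 'I_5 := mkrep 4 [:: [:: true; true; true; true; true]; [:: false; true; true; true; true]; [:: false; false; true; true; true]; [:: false; false; false; true; true]; [:: false; false; false; false; true]] [:: [:: 0; 0; 0; 0; 0]; [:: 0; 1; 1; 1; 1]; [:: 0; 1; 1; 2; 2]; [:: 0; 1; 2; 3; 3]; [:: 0; 1; 2; 3; 4]].
Definition L3L2L2 : RLops 'I_5 := mkrep 4 [:: [:: true; true; true; true; true]; [:: false; true; true; true; true]; [:: false; false; true; true; true]; [:: false; false; false; true; true]; [:: false; false; false; false; true]] [:: [:: 0; 0; 0; 0; 0]; [:: 0; 0; 1; 1; 1]; [:: 0; 1; 2; 2; 2]; [:: 0; 1; 2; 3; 3]; [:: 0; 1; 2; 3; 4]].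
Definition G5 : RLops 'I_5 := mkrep 4 [:: [:: true; true; true; true; true]; [:: false; true; true; true; true]; [:: false; false; true; true; true]; [:: false; false; false; true; true]; [:: false; false; false; false; true]] [:: [:: 0; 0; 0; 0; 0]; [:: 0; 1; 1; 1; 1]; [:: 0; 1; 2; 2; 2]; [:: 0; 1; 2; 3; 3]; [:: 0; 1; 2; 3; 4]].
Definition B4 : RLops 'I_4 := mkrep 3 [:: [:: true; true; true; true]; [:: false; true; false; true]; [:: false; false; true; true]; [:: false; false; false; true]] [:: [:: 0; 0; 0; 0]; [:: 0; 1; 0; 1]; [:: 0; 0; 2; 2]; [:: 0; 1; 2; 3]].
Definition L2B4 : RLops 'I_5 := mkrep 4 [:: [:: true; true; true; true; true]; [:: false; true; true; true; true]; [:: false; false; true; false; true]; [:: false; false; false; true; true]; [:: false; false; false; false; true]] [:: [:: 0; 0; 0; 0; 0]; [:: 0; 1; 1; 1; 1]; [:: 0; 1; 2; 1; 2]; [:: 0; 1; 1; 3; 3]; [:: 0; 1; 2; 3; 4]].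

Definition BLreps (n : nat) : seq (RLops 'I_n.+1) :=
  match n as m return seq (RLops 'I_m.+1) with
  | 1 => [:: L2] | 2 => [:: L3; G3] | 3 => [:: L4; B4; L2L3; L3L2; G4]
  | 4 => [:: L5; L2L4; L4L2; L3L3; L2L2L3; L2L3L2; L3L2L2; G5; L2B4] | _ => [::] end.
Definition MVreps (n : nat) : seq (RLops 'I_n.+1) :=
  match n as m return seq (RLops 'I_m.+1) with
  | 1 => [:: L2] | 2 => [:: L3] | 3 => [:: L4; B4] | 4 => [:: L5] | _ => [::] end.

Section OPc.
Variables (T1 T2 : finType) (L1 : RLops T1) (L2 : RLops T2).
Definition inj1c (x : T1) : OPT T2 L1 :=
  match insub_eq _ x with Some y => inl y | None => inr (rzero L2) end.
Lemma inj1E x : inj1 L1 L2 x = inj1c x.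
Proof. by rewrite /inj1c insub_eqE. Qed.

Definition op_meetc (u v : OPT T2 L1) : OPT T2 L1 :=
  match u, v with
  | inl a, inl b => inj1c (rmeet L1 (val a) (val b))
  | inl a, inr _ => inl a
  | inr _, inl b => inl b
  | inr a, inr b => inr (rmeet L2 a b)
  end.
Definition op_joinc (u v : OPT T2 L1) : OPT T2 L1 :=
  match u, v with
  | inl a, inl b => inj1c (rjoin L1 (val a) (val b))
  | inl _, inr b => inr b
  | inr a, inl _ => inr a
  | inr a, inr b => inr (rjoin L2 a b)
  end.
Definition op_mulc (u v : OPT T2 L1) : OPT T2 L1 :=
  match u, v with
  | inl a, inl b => inj1c (rmul L1 (val a) (val b))
  | inl a, inr _ => inl a
  | inr _, inl b => inl b
  | inr a, inr b => inr (rmul L2 a b)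
  end.
Definition op_impc (u v : OPT T2 L1) : OPT T2 L1 :=
  match u, v with
  | inl a, inl b => if rle L1 (val a) (val b) then inr (rone L2)
                    else inj1c (rimp L1 (val a) (val b))
  | inl _, inr _ => inr (rone L2)
  | inr _, inl b => inl b
  | inr a, inr b => if rle L2 a b then inr (rone L2) else inr (rimp L2 a b)
  end.
Definition opc : RLops (OPT T2 L1) :=
  RLOps op_meetc op_joinc op_mulc op_impc (inj1c (rzero L1)) (inr (rone L2)).

Lemma opE : ordinal_product L1 L2 = opc.
Proof.
rewrite /ordinal_product /opc inj1E; congr RLOps;
  apply: functional_extensionality => -[a|a]; apply: functional_extensionality => -[b|b];
  by rewrite /= ?inj1E.
Qed.
End OPc.

Section Dec.
Variables (k m : nat) (L1 : RLops 'I_k.+1) (L2 : RLops 'I_m.+1).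
Notation N := (k + m).
Notation O := (OPT 'I_m.+1 L1).
Definition eOPT : seq O :=
  [seq inl y | y <- pmap (@insub_eq _ _ {x : 'I_k.+1 | x != rone L1}) (E k)] ++
  [seq inr y | y <- E m].
Lemma mem_eOPT (u : O) : u \in eOPT.
Proof.
rewrite mem_cat; case: u => [y|y].
  apply/orP; left; apply: map_f; rewrite mem_pmap; apply/mapP; exists (val y); first exact: mem_E.
  by rewrite insub_eqE valK.
by apply/orP; right; apply: map_f; apply: mem_E.
Qed.
Definition fO (u : O) : 'I_N.+1 :=
  nth ord0 (E N) (match u with inl x => val (val x) | inr y => k + val y end).
Definition gO (i : 'I_N.+1) : O :=
  if (i < k)%N then inj1c L1 L2 (nth ord0 (E k) i) else inr (nth ord0 (E m) (i - k)).
Definition decomp_ok (r : RLops 'I_N.+1) : bool :=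
  [&& is_RLc (E k) L1 && BLx (E k) L1, is_RLc (E m) L2 && BLx (E m) L2,
      rzero L1 != rone L1, rzero L2 != rone L2,
      all (fun u => gO (fO u) == u) eOPT, all (fun i => fO (gO i) == i) (E N) &
      hom_opsc eOPT (opc L1 L2) r fO].
Lemma decomp_okP r : decomp_ok r ->
  exists (T1 T2 : finType) (L1 : RLops T1) (L2 : RLops T2),
    [/\ is_BL L1, is_BL L2, rzero L1 != rone L1, rzero L2 != rone L2 &
        iso_ops (ordinal_product L1 L2) r].
Proof.
case/and5P => b1 b2 n1 n2 /and3P [c1 c2 h].
exists _, _, L1, L2; split => //; rewrite ?(BL_c (@mem_E _)) //.
exists fO; split.
  exists gO => [u|i]; [exact/eqP/(allP c1 u (mem_eOPT u)) | exact/eqP/(allP c2 i (mem_E i))].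
by rewrite opE (hom_c mem_eOPT).
Qed.
End Dec.


Lemma count_gen n (P : forall T : finType, RLops T -> bool) (X : RLops 'I_n.+1 -> bool)
  (R : seq (RLops 'I_n.+1)) :
  (forall t, P _ t = X t) -> (forall t : RLops 'I_n.+1, P _ t -> is_RL t) -> all X R ->
  pairwise (fun a b => ~~ isob a b) R ->
  (forall t : RLops 'I_n.+1, RLspec t -> P _ t -> exists2 r, memP r R & exists f, bijective f /\ homspec r t f) ->
  num_classes n.+1 P = size R.
Proof.
move=> PX PRL aX pw cpl; rewrite -(size_map (@alg_of n)); apply: count_classes.
- move=> r /map_memP [t tR ->]; rewrite to_ops_alg_of PX; exact: memP_all aX tR.
- rewrite pairwise_map; apply: sub_pw pw => a b; apply: contra; exact: iso_isob.
- move=> a Pa; have /RLP H := PRL _ Pa.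
  have [r rR [f [fb fh]]] := cpl _ H Pa.
  by exists (alg_of r); [exact: memP_map | exact: hom_iso fb fh].
Qed.

Lemma checker_ok n : (0 < n <= 4)%N -> checker (BLreps n) (MVreps n).
Proof.
case: n => [|[|[|[|[|n]]]]] hn; [discriminate hn| | | | |discriminate hn].
- vm_compute; reflexivity.
- vm_compute; reflexivity.
- vm_compute; reflexivity.
- vm_compute; reflexivity.
Qed.

Lemma BLreps_ok n : (0 < n <= 4)%N ->
  all (fun t => is_RLc (E n) t && BLx (E n) t) (BLreps n) &&
  pairwise (fun a b => ~~ isob a b) (BLreps n).
Proof.
case: n => [|[|[|[|[|n]]]]] hn; [discriminate hn| | | | |discriminate hn];
  vm_compute; reflexivity.
Qed.
Lemma MVreps_ok n : (0 < n <= 4)%N ->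
  all (fun t => is_RLc (E n) t && MVx (E n) t) (MVreps n) &&
  pairwise (fun a b => ~~ isob a b) (MVreps n).
Proof.
case: n => [|[|[|[|[|n]]]]] hn; [discriminate hn| | | | |discriminate hn];
  vm_compute; reflexivity.
Qed.

Lemma BLcountE n : (0 < n <= 4)%N -> BLcount n.+1 = size (BLreps n).
Proof.
move=> hn; have /andP [a p] := BLreps_ok hn.
apply: (count_gen (X := fun t => is_RLc (E n) t && BLx (E n) t)) => //.
- by move=> t; rewrite (BL_c (@mem_E n)).
- by move=> t /andP [].
- move=> t H Pt; case/andP: (hn) => n0 _.
  exact: ((classification (checker_ok hn) n0 H).1 Pt).
Qed.
Lemma MVcountE n : (0 < n <= 4)%N -> MVcount n.+1 = size (MVreps n).
Proof.
move=> hn; have /andP [a p] := MVreps_ok hn.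
apply: (count_gen (X := fun t => is_RLc (E n) t && MVx (E n) t)) => //.
- by move=> t; rewrite (MV_c (@mem_E n)).
- by move=> t /andP [].
- move=> t H Pt; case/andP: (hn) => n0 _.
  exact: ((classification (checker_ok hn) n0 H).2 Pt).
Qed.

Ltac notmv := let H := fresh in move=> /negP H; exfalso; apply: H;
  rewrite (MV_c (@mem_E _)); vm_compute; reflexivity.
Ltac dec a b := move=> _; apply: (@decomp_okP _ _ a b); vm_compute; reflexivity.

Lemma decomps n (r : RLops 'I_n.+1) : memP r (BLreps n) -> ~~ is_MV r ->
  exists (T1 T2 : finType) (L1 : RLops T1) (L2 : RLops T2),
    [/\ is_BL L1, is_BL L2, rzero L1 != rone L1, rzero L2 != rone L2 &
        iso_ops (ordinal_product L1 L2) r].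
Proof.
case: n r => [|[|[|[|[|n]]]]] r; try (by case).
- case=> [->|[]]; notmv.
- case=> [->|[->|[]]]; [notmv | dec L2 L2].
- case=> [->|[->|[->|[->|[->|[]]]]]]; [notmv | notmv | dec L2 L3 | dec L3 L2 | dec L2 G3].
- case=> [->|[->|[->|[->|[->|[->|[->|[->|[->|[]]]]]]]]]];
  [notmv | dec L2 L4 | dec L4 L2 | dec L3 L3 | dec L2 L2L3 | dec L2 L3L2 | dec L3 G3
         | dec L2 G4 | dec L2 B4].
Qed.

Lemma part1 (T : finType) (A : RLops T) :
  (2 <= #|T| <= 5)%N -> is_BL A -> ~~ is_MV A ->
  exists (T1 T2 : finType) (L1 : RLops T1) (L2 : RLops T2),
    [/\ is_BL L1, is_BL L2, rzero L1 != rone L1, rzero L2 != rone L2 &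
        iso_ops (ordinal_product L1 L2) A].
Proof.
move=> /andP [h2 h5] hB hM.
have [n hn] : exists n, #|T| = n.+1 by exists #|T|.-1; rewrite prednK // ltnW.
have hn' : (0 < n <= 4)%N by move: h2 h5; rewrite hn ltnS => -> .
pose g : 'I_n.+1 -> T := fun i => enum_val (cast_ord (esym hn) i).
pose h : T -> 'I_n.+1 := fun x => cast_ord hn (enum_rank x).
have hK : cancel h g by move=> x; rewrite /g /h cast_ordK enum_rankK.
have gK : cancel g h by move=> i; rewrite /g /h enum_valK cast_ordKV.
pose t := pull A g h.
have hg : homspec t A g := pull_hom A hK.
have [_ eB eM] := iso_transfer (Bijective gK hK) hg.
have /BLP [Ht _ _] : is_BL t by rewrite eB.
case/andP: (hn') => n0 _.
have [r rR [f [fb fh]]] := (classification (checker_ok hn') n0 Ht).1 (etrans eB hB).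
have [_ _ eM'] := iso_transfer fb fh.
have rM : ~~ is_MV r by rewrite eM' eM.
have [T1 [T2 [L1 [L2 [b1 b2 n1 n2 [F [Fb /homP Fh]]]]]]] := decomps rR rM.
exists T1, T2, L1, L2; split => //.
exists (g \o (f \o F)); split.
  by apply: bij_comp; [exact: (Bijective gK hK) | exact: bij_comp].
by apply/homP; apply: hom_comp hg; apply: hom_comp fh.
Qed.

Theorem theorem4p7 :
  (forall (T : finType) (A : RLops T),
      2 <= #|T| <= 5 -> is_BL A -> ~~ is_MV A ->
      exists (T1 T2 : finType) (L1 : RLops T1) (L2 : RLops T2),
        [/\ is_BL L1, is_BL L2, rzero L1 != rone L1, rzero L2 != rone L2 &
            iso_ops (ordinal_product L1 L2) A])
  /\
  [/\ BLcount 2 = MVcount 2 /\ MVcount 2 = pi_dec 2 + 1,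
      BLcount 3 = MVcount 3 + BLcount 2 /\
        MVcount 3 + BLcount 2 = pi_dec 3 + pi_dec 2 + 2,
      BLcount 4 = MVcount 4 + BLcount 3 + BLcount 2 /\
        MVcount 4 + BLcount 3 + BLcount 2 = pi_dec 4 + pi_dec 3 + 2 * pi_dec 2 + 4 &
      BLcount 5 = MVcount 5 + BLcount 4 + BLcount 3 + BLcount 2 /\
        MVcount 5 + BLcount 4 + BLcount 3 + BLcount 2
          = pi_dec 5 + pi_dec 4 + 2 * pi_dec 3 + 4 * pi_dec 2 + 8].
Proof.
split; first exact: part1.
have p2 : pi_dec 2 = 0 by apply: pi_dec_prime.
have p3 : pi_dec 3 = 0 by apply: pi_dec_prime.
have p5 : pi_dec 5 = 0 by apply: pi_dec_prime.
have b2 : BLcount 2 = 1 by apply: (BLcountE (n := 1)).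
have b3 : BLcount 3 = 2 by apply: (BLcountE (n := 2)).
have b4 : BLcount 4 = 5 by apply: (BLcountE (n := 3)).
have b5 : BLcount 5 = 9 by apply: (BLcountE (n := 4)).
have m2 : MVcount 2 = 1 by apply: (MVcountE (n := 1)).
have m3 : MVcount 3 = 1 by apply: (MVcountE (n := 2)).
have m4 : MVcount 4 = 2 by apply: (MVcountE (n := 3)).
have m5 : MVcount 5 = 1 by apply: (MVcountE (n := 4)).
by rewrite p2 p3 p5 pi_dec4 b2 b3 b4 b5 m2 m3 m4 m5.
Qed.
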